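(* Let $M$ be a duplicial module in a pre-additive category. For all $n\ge0$, $$\pi_n=(1-b_{n+1}d_n)^{n+1}(1-d_{n-1}b_n)^n .$$
   Context: Let $\mathcal A$ be a pre-additive category. Let $\Lambda_+$ be the category with objects $[n]$, $n\ge0$, where $\Lambda_+([m],[n])$ is the set of weakly monotone $f:\mathbb Z\to\mathbb Z$ with $f(j+m+1)=f(j)+n+1$ for all $j$ and $f(0)\ge0$. Define $\varepsilon^n_i:[n-1]\to[n]$ ($n\ge1$, $0\le i\le n$) by $\varepsilon^n_i(j)=j$ for $0\le j<i$, $j+1$ for $i\le j\le n-1$, and $\eta^n_i:[n+1]\to[n]$ ($0\le i\le n+1$) by $\eta^n_i(j)=j$ for $0\le j\le i$, $j-1$ for $i<j\le n+1$. A duplicial module is a functor $M:\Lambda_+^{op}\to\mathcal A$; $M_n=M([n])$, $\partial_{n,i}=M(\varepsilon^n_i):M_n\to M_{n-1}$, $s_{n,i}=M(\eta^n_i):M_n\to M_{n+1}$. Convention $M_{-1}=0$, maps into/out of it zero. Define $b_n=\sum_{i=0}^n(-1)^i\partial_{n,i}$ ($b_0=0$), $d_n=\sum_{i=0}^{n+1}(-1)^is_{n,i}$ ($d_{-1}=0$), the Karoubi operator $\kappa_n=(-1)^n(\partial_{n+1,0}s_{n,n+1}-s_{n-1,n}\partial_{n,0})$ (so $\kappa_0=\partial_{1,0}s_{0,1}$), and the Dwyer–Kan operator $\pi_n=(-1)^n\partial_{n+1,0}\kappa_{n+1}^n s_{n,n+1}$. *)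

(* Defs.v *)
From HB Require Import structures.
From mathcomp Require Import all_boot all_order all_algebra.
Set Implicit Arguments. Unset Strict Implicit. Unset Printing Implicit Defensive.
Import Order.TTheory GRing.Theory Num.Theory.
Local Open Scope ring_scope.

(** Pre-additive category: hom-sets are abelian groups (zmodType) and
    composition is bilinear. [hcomp g f] is g ∘ f. *)
Record PreAdditive := {
  Obj : Type;
  Hom : Obj -> Obj -> zmodType;
  idm : forall X, Hom X X;
  hcomp : forall X Y Z, Hom Y Z -> Hom X Y -> Hom X Z;
  hcompA : forall X Y Z W (h : Hom Z W) (g : Hom Y Z) (f : Hom X Y),
      hcomp h (hcomp g f) = hcomp (hcomp h g) f;
  hcomp1m : forall X Y (f : Hom X Y), hcomp (idm Y) f = f;
  hcompm1 : forall X Y (f : Hom X Y), hcomp f (idm X) = f;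
  hcompDl : forall X Y Z (g1 g2 : Hom Y Z) (f : Hom X Y),
      hcomp (g1 + g2) f = hcomp g1 f + hcomp g2 f;
  hcompDr : forall X Y Z (g : Hom Y Z) (f1 f2 : Hom X Y),
      hcomp g (f1 + f2) = hcomp g f1 + hcomp g f2
}.
Arguments Hom : clear implicits.
Arguments Obj : clear implicits.
Arguments idm {_}.
Arguments hcomp {_ X Y Z}.

(** Morphisms [m] -> [n] of Lambda_+ : weakly monotone f : Z -> Z with
    f(j+m+1) = f(j)+n+1 and f(0) >= 0. *)
Definition isLam (m n : nat) (f : int -> int) : Prop :=
  (forall x y : int, x <= y -> f x <= f y) /\
  (forall j : int, f (j + (m.+1)%:Z) = f j + (n.+1)%:Z) /\
  0 <= f 0.

(** A duplicial module: a functor Lambda_+^op -> A, given by objects M n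
    and, for each morphism f : [m] -> [n] of Lambda_+, a map M n -> M m,
    respecting identities and composition. *)
Record Duplicial (A : PreAdditive) := {
  Mob : nat -> Obj A;
  Mmor : forall m n : nat, (int -> int) -> Hom A (Mob n) (Mob m);
  Mmor_id : forall n, Mmor n n id = idm (Mob n);
  Mmor_comp : forall m n p (f g : int -> int), isLam m n f -> isLam n p g ->
      Mmor m p (g \o f) = hcomp (Mmor m n f) (Mmor n p g)
}.

(** ε^n_i : [n-1] -> [n] (n >= 1), extended periodically to Z. *)
Definition eps (n : nat) (i : nat) (j : int) : int :=
  let q := (j %/ n%:Z)%Z in let r := (j %% n%:Z)%Z in
  q * (n.+1)%:Z + (if r < i%:Z then r else r + 1).

(** η^n_i : [n+1] -> [n], extended periodically to Z. *)
Definition eta (n : nat) (i : nat) (j : int) : int :=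
  let q := (j %/ (n.+2)%:Z)%Z in let r := (j %% (n.+2)%:Z)%Z in
  q * (n.+1)%:Z + (if r <= i%:Z then r else r - 1).

Section Ops.
Variables (A : PreAdditive) (M : Duplicial A).
Local Notation MM := (Mob M).

Definition sgn (V : zmodType) (k : nat) (x : V) : V := if odd k then - x else x.

(** del k i = ∂_{k+1,i} : M_{k+1} -> M_k *)
Definition del (k i : nat) : Hom A (MM k.+1) (MM k) := Mmor M k k.+1 (eps k.+1 i).
Definition sdeg (n i : nat) : Hom A (MM n) (MM n.+1) := Mmor M n.+1 n (eta n i).

(** bb k = b_{k+1} *)
Definition bb (k : nat) : Hom A (MM k.+1) (MM k) :=
  \sum_(i < k.+2) sgn i (del k i).
Definition dd (n : nat) : Hom A (MM n) (MM n.+1) :=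
  \sum_(i < n.+2) sgn i (sdeg n i).

(** Karoubi operator κ_n (with the convention M_{-1} = 0). *)
Definition kappa (n : nat) : Hom A (MM n) (MM n) :=
  sgn n (hcomp (del n 0) (sdeg n n.+1) -
         match n return Hom A (MM n) (MM n) with
         | 0 => 0
         | k.+1 => hcomp (sdeg k k.+1) (del k 0)
         end).

Definition hpow (X : Obj A) (f : Hom A X X) (k : nat) : Hom A X X :=
  iter k (hcomp f) (idm X).

Definition piDK (n : nat) : Hom A (MM n) (MM n) :=
  sgn n (hcomp (del n 0) (hcomp (hpow (kappa n.+1) n) (sdeg n n.+1))).

Definition bd (n : nat) : Hom A (MM n) (MM n) := hcomp (bb n) (dd n).
Definition db (n : nat) : Hom A (MM n) (MM n) :=
  match n return Hom A (MM n) (MM n) with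
  | 0 => 0
  | k.+1 => hcomp (dd k) (bb k)
  end.
End Ops.

(* Main.v *)
From Pilot Require Import Defs.
From HB Require Import structures.
From mathcomp Require Import all_boot all_order all_algebra.
From mathcomp Require Import zify.
From Stdlib Require Import FunctionalExtensionality.
Import Pilot.Defs.
Set Implicit Arguments. Unset Strict Implicit. Unset Printing Implicit Defensive.
Import Order.TTheory GRing.Theory Num.Theory.
Local Open Scope ring_scope.

Lemma divmod_uniq (x q r P : int) : 0 <= r -> r < P -> x = q * P + r ->
  (x %/ P)%Z = q /\ (x %% P)%Z = r.
Proof.
move=> r0 rP xE.
have P0 : P != 0 by lia.
have hd : (x %/ P)%Z = q.
  by rewrite xE divzMDl // divz_small ?addr0 // r0 /=; lia.
split=> //. have := divz_eq x P. rewrite hd. lia.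
Qed.

Lemma divmod_bounds (x P : int) : 0 < P -> 0 <= (x %% P)%Z /\ (x %% P)%Z < P.
Proof.
move=> P0; have Pn : P != 0 by lia.
split; first exact: modz_ge0.
have := ltz_mod x Pn. have -> : `|P| = P by apply/normr_idP; lia.
by [].
Qed.

Definition perF (P C : int) (g : int -> int) (x : int) : int :=
  (x %/ P)%Z * C + g (x %% P)%Z.

Lemma perF_mono P C g : 0 < P -> 0 <= C ->
  (forall r, 0 <= r -> r < P -> 0 <= g r /\ g r <= C) ->
  (forall r s, 0 <= r -> r <= s -> s < P -> g r <= g s) ->
  forall x y, x <= y -> perF P C g x <= perF P C g y.
Proof.
move=> P0 C0 gb gm x y xy; rewrite /perF.
have [rx0 rxP] := divmod_bounds x P0.
have [ry0 ryP] := divmod_bounds y P0.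
have ex := divz_eq x P; have ey := divz_eq y P.
set qx := (x %/ P)%Z in ex *; set qy := (y %/ P)%Z in ey *.
set rx := (x %% P)%Z in ex rx0 rxP *; set ry := (y %% P)%Z in ey ry0 ryP *.
have [gx0 gxC] := gb _ rx0 rxP; have [gy0 gyC] := gb _ ry0 ryP.
have [lt|ge] := ltP qx qy.
  have h1 : (qx + 1) * C <= qy * C by rewrite ler_wpM2r //; lia.
  lia.
have [lt2|ge2] := ltP qy qx.
  have h1 : (qy + 1) * P <= qx * P by rewrite ler_wpM2r //; lia.
  lia.
have qe : qx = qy by lia.
rewrite qe; rewrite qe in ex.
have : g rx <= g ry by apply: gm => //; lia.
lia.
Qed.

Lemma perF_per P C g : 0 < P -> forall j, perF P C g (j + P) = perF P C g j + C.
Proof.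
move=> P0 j; rewrite /perF.
have [rx0 rxP] := divmod_bounds j P0.
have e : j + P = ((j %/ P)%Z + 1) * P + (j %% P)%Z.
  have := divz_eq j P; lia.
have [-> ->] := divmod_uniq rx0 rxP e.
lia.
Qed.

Lemma eps_isLam k i : isLam k k.+1 (eps k.+1 i).
Proof.
have P0 : (0 : int) < (k.+1)%:Z by lia.
have gb : forall r, 0 <= r -> r < (k.+1)%:Z ->
   0 <= (if r < i%:Z then r else r + 1) /\ (if r < i%:Z then r else r + 1) <= (k.+2)%:Z.
  by move=> r r0 rP; case: ifPn => ?; lia.
have gm : forall r s, 0 <= r -> r <= s -> s < (k.+1)%:Z ->
   (if r < i%:Z then r else r + 1) <= (if s < i%:Z then s else s + 1).
  by move=> r s r0 rs sP; do 2 case: ifPn => ?; lia.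
split; [|split].
- move=> x y xy. have C0 : (0:int) <= (k.+2)%:Z by lia.
  change (perF (k.+1)%:Z (k.+2)%:Z (fun r => if r < i%:Z then r else r + 1) x <=
   perF (k.+1)%:Z (k.+2)%:Z (fun r => if r < i%:Z then r else r + 1) y).
  exact: (@perF_mono (k.+1)%:Z (k.+2)%:Z _ P0 C0 gb gm x y xy).
- move=> j. change (perF (k.+1)%:Z (k.+2)%:Z (fun r => if r < i%:Z then r else r + 1) (j + (k.+1)%:Z) =
   perF (k.+1)%:Z (k.+2)%:Z (fun r => if r < i%:Z then r else r + 1) j + (k.+2)%:Z).
  exact: (@perF_per (k.+1)%:Z (k.+2)%:Z _ P0 j).
- change (0 <= perF (k.+1)%:Z (k.+2)%:Z (fun r => if r < i%:Z then r else r + 1) 0).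
  rewrite /perF.
  have [-> ->] := @divmod_uniq 0 0 0 (k.+1)%:Z (lexx _) P0 ltac:(by rewrite mul0r).
  by rewrite mul0r add0r; case: (gb 0 (lexx 0) P0).
Qed.

Lemma eta_isLam n i : isLam n.+1 n (eta n i).
Proof.
have P0 : (0 : int) < (n.+2)%:Z by lia.
have gb : forall r, 0 <= r -> r < (n.+2)%:Z ->
   0 <= (if r <= i%:Z then r else r - 1) /\ (if r <= i%:Z then r else r - 1) <= (n.+1)%:Z.
  by move=> r r0 rP; case: ifPn => ?; lia.
have gm : forall r s, 0 <= r -> r <= s -> s < (n.+2)%:Z ->
   (if r <= i%:Z then r else r - 1) <= (if s <= i%:Z then s else s - 1).
  by move=> r s r0 rs sP; do 2 case: ifPn => ?; lia.
split; [|split].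
- move=> x y xy. have C0 : (0:int) <= (n.+1)%:Z by lia.
  change (perF (n.+2)%:Z (n.+1)%:Z (fun r => if r <= i%:Z then r else r - 1) x <=
   perF (n.+2)%:Z (n.+1)%:Z (fun r => if r <= i%:Z then r else r - 1) y).
  exact: (@perF_mono (n.+2)%:Z (n.+1)%:Z _ P0 C0 gb gm x y xy).
- move=> j. change (perF (n.+2)%:Z (n.+1)%:Z (fun r => if r <= i%:Z then r else r - 1) (j + (n.+2)%:Z) =
   perF (n.+2)%:Z (n.+1)%:Z (fun r => if r <= i%:Z then r else r - 1) j + (n.+1)%:Z).
  exact: (@perF_per (n.+2)%:Z (n.+1)%:Z _ P0 j).
- change (0 <= perF (n.+2)%:Z (n.+1)%:Z (fun r => if r <= i%:Z then r else r - 1) 0).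
  rewrite /perF.
  have [-> ->] := @divmod_uniq 0 0 0 (n.+2)%:Z (lexx _) P0 ltac:(by rewrite mul0r).
  by rewrite mul0r add0r; case: (gb 0 (lexx 0) P0).
Qed.

Lemma comp_isLam m n p f g : isLam m n f -> isLam n p g -> isLam m p (g \o f).
Proof.
move=> [fm [fp f0]] [gm [gp g0]]; split; [|split] => /=.
- by move=> x y xy; apply: gm; apply: fm.
- by move=> j; rewrite fp gp.
- exact: le_trans g0 (gm _ _ f0).
Qed.

Lemma lam_per_nat m n f (q : nat) : isLam m n f ->
  forall j, f (j + q%:Z * (m.+1)%:Z) = f j + q%:Z * (n.+1)%:Z.
Proof.
move=> [_ [fp _]]; elim: q => [|q IH] j.
  by rewrite !mul0r !addr0.
have -> : j + (q.+1)%:Z * (m.+1)%:Z = (j + q%:Z * (m.+1)%:Z) + (m.+1)%:Z by lia.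
rewrite fp IH; lia.
Qed.

Lemma lam_ext m n f g : isLam m n f -> isLam m n g ->
  (forall j : int, 0 <= j -> j <= m%:Z -> f j = g j) -> f = g.
Proof.
move=> hf hg e; apply: functional_extensionality => x.
have P0 : (0 : int) < (m.+1)%:Z by lia.
have [r0 rP] := divmod_bounds x P0.
have ex := divz_eq x (m.+1)%:Z.
move: ex r0 rP; move: (x %/ _)%Z (x %% _)%Z => q r ex r0 rP.
have er : f r = g r by apply: e => //; lia.
case: q ex => [q|q] ex.
- rewrite ex addrC (lam_per_nat q hf) (lam_per_nat q hg) er //.
- have h1 := lam_per_nat (q.+1) hf x.
  have h2 := lam_per_nat (q.+1) hg x.
  have e2 : x + (q.+1)%:Z * (m.+1)%:Z = r by rewrite {1}ex NegzE; lia.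
  rewrite e2 er in h1; rewrite e2 in h2. lia.
Qed.

Lemma eps_lo (n i : nat) (x : int) : 0 <= x -> x < n%:Z ->
  eps n i x = if x < i%:Z then x else x + 1.
Proof.
move=> x0 xn; rewrite /eps.
have [-> ->] := @divmod_uniq x 0 x n%:Z x0 xn ltac:(by rewrite mul0r add0r).
by rewrite mul0r add0r.
Qed.

Lemma eps_hi (n i : nat) (x : int) : n%:Z <= x -> x < n%:Z + n%:Z ->
  eps n i x = (if x - n%:Z < i%:Z then x - n%:Z else x - n%:Z + 1) + (n.+1)%:Z.
Proof.
move=> x0 xn; rewrite /eps.
have h0 : 0 <= x - n%:Z by lia.
have h1 : x - n%:Z < n%:Z by lia.
have [-> ->] := @divmod_uniq x 1 (x - n%:Z) n%:Z h0 h1 ltac:(lia).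
by rewrite mul1r addrC.
Qed.

Lemma eta_lo (n i : nat) (x : int) : 0 <= x -> x < (n.+2)%:Z ->
  eta n i x = if x <= i%:Z then x else x - 1.
Proof.
move=> x0 xn; rewrite /eta.
have [-> ->] := @divmod_uniq x 0 x (n.+2)%:Z x0 xn ltac:(by rewrite mul0r add0r).
by rewrite mul0r add0r.
Qed.

Lemma eta_hi (n i : nat) (x : int) : (n.+2)%:Z <= x -> x < (n.+2)%:Z + (n.+2)%:Z ->
  eta n i x = (if x - (n.+2)%:Z <= i%:Z then x - (n.+2)%:Z else x - (n.+2)%:Z - 1) + (n.+1)%:Z.
Proof.
move=> x0 xn; rewrite /eta.
have h0 : 0 <= x - (n.+2)%:Z by lia.
have h1 : x - (n.+2)%:Z < (n.+2)%:Z by lia.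
have [-> ->] := @divmod_uniq x 1 (x - (n.+2)%:Z) (n.+2)%:Z h0 h1 ltac:(lia).
by rewrite mul1r addrC.
Qed.

Ltac ev := repeat match goal with
 | |- context [eps ?n ?i ?x] =>
     first [ rewrite (@eps_lo n i x); [| lia | lia] | rewrite (@eps_hi n i x); [| lia | lia] ]
 | |- context [eta ?n ?i ?x] =>
     first [ rewrite (@eta_lo n i x); [| lia | lia] | rewrite (@eta_hi n i x); [| lia | lia] ]
 | |- context [if ?c then _ else _] => case: ifPn => ?
 | |- context [eps ?n ?i ?x] => case: (ltP x n%:Z) => ?;
     first [ rewrite (@eps_lo n i x); [| lia | lia] | rewrite (@eps_hi n i x); [| lia | lia] ]
 | |- context [eta ?n ?i ?x] => case: (ltP x (n.+2)%:Z) => ?;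
     first [ rewrite (@eta_lo n i x); [| lia | lia] | rewrite (@eta_hi n i x); [| lia | lia] ]
 end; lia.

Lemma testE1 n i j x : (i <= n.+1)%N -> (j == i) || (j == i.+1) -> (j <= n.+1)%N ->
  0 <= x -> x <= n%:Z -> eta n i (eps n.+1 j x) = x.
Proof.
move=> hi /orP[/eqP->|/eqP->] hj x0 xn; ev.
Qed.

Lemma fE2 k i j x : (j < i)%N -> (i <= k.+2)%N -> (0 < j)%N || (i <= k.+1)%N ->
  0 <= x -> x <= (k.+1)%:Z ->
  eta k.+1 i (eps k.+2 j x) = eps k.+1 j (eta k i.-1 x).
Proof. move=> h1 h2 h3 x0 x1; case: i h1 h2 h3 => [|i] //= h1 h2 /orP[] h3; ev. Qed.

Lemma fE3 k i j x : (i.+1 < j)%N -> (j <= k.+2)%N ->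
  0 <= x -> x <= (k.+1)%:Z ->
  eta k.+1 i (eps k.+2 j x) = eps k.+1 j.-1 (eta k i x).
Proof. move=> h1 h2 x0 x1; case: j h1 h2 => [|j] //= h1 h2; ev. Qed.

Lemma fE5 k i j x : (i < j)%N -> (j <= k.+2)%N ->
  0 <= x -> x <= k%:Z ->
  eps k.+2 j (eps k.+1 i x) = eps k.+2 i (eps k.+1 j.-1 x).
Proof. move=> h1 h2 x0 x1; case: j h1 h2 => [|j] //= h1 h2; ev. Qed.

Lemma fE6 n i j x : (i <= j)%N -> (j <= n.+1)%N ->
  0 <= x -> x <= (n.+2)%:Z ->
  eta n j (eta n.+1 i x) = eta n i (eta n.+1 j.+1 x).
Proof. move=> h1 h2 x0 x1; ev. Qed.

Lemma hcomp0l (A : PreAdditive) X Y Z (f : Hom A X Y) : hcomp (0 : Hom A Y Z) f = 0.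
Proof.
have h := hcompDl (0 : Hom A Y Z) 0 f; rewrite addr0 in h.
by apply: (@addrI _ (hcomp (0 : Hom A Y Z) f)); rewrite -h addr0.
Qed.
Lemma hcomp0r (A : PreAdditive) X Y Z (g : Hom A Y Z) : hcomp g (0 : Hom A X Y) = 0.
Proof.
have h := hcompDr g (0 : Hom A X Y) 0; rewrite addr0 in h.
by apply: (@addrI _ (hcomp g (0 : Hom A X Y))); rewrite -h addr0.
Qed.
Lemma hcompNl (A : PreAdditive) X Y Z (g : Hom A Y Z) (f : Hom A X Y) : hcomp (- g) f = - hcomp g f.
Proof. by apply/eqP; rewrite -addr_eq0 -hcompDl addNr hcomp0l. Qed.
Lemma hcompNr (A : PreAdditive) X Y Z (g : Hom A Y Z) (f : Hom A X Y) : hcomp g (- f) = - hcomp g f.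
Proof. by apply/eqP; rewrite -addr_eq0 -hcompDr addNr hcomp0r. Qed.
Lemma hcompBl (A : PreAdditive) X Y Z (g1 g2 : Hom A Y Z) (f : Hom A X Y) :
  hcomp (g1 - g2) f = hcomp g1 f - hcomp g2 f.
Proof. by rewrite hcompDl hcompNl. Qed.
Lemma hcompBr (A : PreAdditive) X Y Z (g : Hom A Y Z) (f1 f2 : Hom A X Y) :
  hcomp g (f1 - f2) = hcomp g f1 - hcomp g f2.
Proof. by rewrite hcompDr hcompNr. Qed.
Lemma hcomp_suml (A : PreAdditive) X Y Z I (r : seq I) (P : pred I) (F : I -> Hom A Y Z) (f : Hom A X Y) :
  hcomp (\sum_(i <- r | P i) F i) f = \sum_(i <- r | P i) hcomp (F i) f.
Proof. by apply: (big_morph (fun g => hcomp g f)) => [g1 g2|]; [rewrite hcompDl|rewrite hcomp0l]. Qed.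
Lemma hcomp_sumr (A : PreAdditive) X Y Z I (r : seq I) (P : pred I) (g : Hom A Y Z) (F : I -> Hom A X Y) :
  hcomp g (\sum_(i <- r | P i) F i) = \sum_(i <- r | P i) hcomp g (F i).
Proof. by apply: (big_morph (fun f => hcomp g f)) => [f1 f2|]; [rewrite hcompDr|rewrite hcomp0r]. Qed.

Lemma sgn0n (V : zmodType) (x : V) : sgn 0 x = x. Proof. by []. Qed.
Lemma sgnS (V : zmodType) k (x : V) : sgn k.+1 x = - sgn k x.
Proof. by rewrite /sgn /=; case: (odd k) => //=; rewrite opprK. Qed.
Lemma sgnD (V : zmodType) k (x y : V) : sgn k (x + y) = sgn k x + sgn k y.
Proof. by rewrite /sgn; case: (odd k) => //; rewrite opprD. Qed.
Lemma sgnN (V : zmodType) k (x : V) : sgn k (- x) = - sgn k x.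
Proof. by rewrite /sgn; case: (odd k). Qed.
Lemma sgnB (V : zmodType) k (x y : V) : sgn k (x - y) = sgn k x - sgn k y.
Proof. by rewrite sgnD sgnN. Qed.
Lemma sgn0 (V : zmodType) k : sgn k (0 : V) = 0.
Proof. by rewrite /sgn; case: (odd k); rewrite ?oppr0. Qed.
Lemma sgnK (V : zmodType) k (x : V) : sgn k (sgn k x) = x.
Proof. by rewrite /sgn; case: (odd k); rewrite ?opprK. Qed.
Lemma sgn_add (V : zmodType) a b (x : V) : sgn (a + b) x = sgn a (sgn b x).
Proof. by elim: a => [|a IH] //; rewrite addSn !sgnS IH. Qed.
Lemma sgn_sum (V : zmodType) I (r : seq I) (P : pred I) k (F : I -> V) :
  sgn k (\sum_(i <- r | P i) F i) = \sum_(i <- r | P i) sgn k (F i).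
Proof. by apply: (big_morph (sgn k)) => [x y|]; [rewrite sgnD|rewrite sgn0]. Qed.
Lemma hcomp_sgnl (A : PreAdditive) X Y Z k (g : Hom A Y Z) (f : Hom A X Y) :
  hcomp (sgn k g) f = sgn k (hcomp g f).
Proof. by rewrite /sgn; case: (odd k); rewrite ?hcompNl. Qed.
Lemma hcomp_sgnr (A : PreAdditive) X Y Z k (g : Hom A Y Z) (f : Hom A X Y) :
  hcomp g (sgn k f) = sgn k (hcomp g f).
Proof. by rewrite /sgn; case: (odd k); rewrite ?hcompNr. Qed.

Lemma Mrel (A : PreAdditive) (M : Duplicial A) m n n' p f g f' g' :
  isLam m n f -> isLam n p g -> isLam m n' f' -> isLam n' p g' ->
  (forall j : int, 0 <= j -> j <= m%:Z -> g (f j) = g' (f' j)) ->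
  hcomp (Mmor M m n f) (Mmor M n p g) = hcomp (Mmor M m n' f') (Mmor M n' p g').
Proof.
move=> hf hg hf' hg' e; rewrite -!Mmor_comp //; congr (Mmor M m p _).
exact: lam_ext (comp_isLam hf hg) (comp_isLam hf' hg') e.
Qed.

Lemma hE1 (A : PreAdditive) (M : Duplicial A) n i j : (i <= n.+1)%N -> (j == i) || (j == i.+1) -> (j <= n.+1)%N ->
  hcomp (del M n j) (sdeg M n i) = idm (Mob M n).
Proof.
move=> h1 h2 h3; rewrite /del /sdeg -(Mmor_comp _ (eps_isLam _ _) (eta_isLam _ _)).
rewrite -[X in _ = X](Mmor_id M n).
congr (Mmor M n n _).
apply: lam_ext; [exact: comp_isLam (eps_isLam _ _) (eta_isLam _ _)| |].
  by split; [|split].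
by move=> x x0 x1 /=; apply: testE1.
Qed.

Lemma hE2 (A : PreAdditive) (M : Duplicial A) k i j : (j < i)%N -> (i <= k.+2)%N -> (0 < j)%N || (i <= k.+1)%N ->
  hcomp (del M k.+1 j) (sdeg M k.+1 i) = hcomp (sdeg M k i.-1) (del M k j).
Proof.
move=> h1 h2 h3; apply: Mrel; try exact: eps_isLam; try exact: eta_isLam.
by move=> x x0 x1; apply: fE2.
Qed.

Lemma hE3 (A : PreAdditive) (M : Duplicial A) k i j : (i.+1 < j)%N -> (j <= k.+2)%N ->
  hcomp (del M k.+1 j) (sdeg M k.+1 i) = hcomp (sdeg M k i) (del M k j.-1).
Proof.
move=> h1 h2; apply: Mrel; try exact: eps_isLam; try exact: eta_isLam.
by move=> x x0 x1; apply: fE3.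
Qed.

Lemma hE5 (A : PreAdditive) (M : Duplicial A) k i j : (i < j)%N -> (j <= k.+2)%N ->
  hcomp (del M k i) (del M k.+1 j) = hcomp (del M k j.-1) (del M k.+1 i).
Proof.
move=> h1 h2; apply: Mrel; try exact: eps_isLam; try exact: eta_isLam.
by move=> x x0 x1; apply: fE5.
Qed.

Lemma hE6 (A : PreAdditive) (M : Duplicial A) n i j : (i <= j)%N -> (j <= n.+1)%N ->
  hcomp (sdeg M n.+1 i) (sdeg M n j) = hcomp (sdeg M n.+1 j.+1) (sdeg M n i).
Proof.
move=> h1 h2; apply: Mrel; try exact: eps_isLam; try exact: eta_isLam.
by move=> x x0 x1; apply: fE6.
Qed.

Lemma sum_from (V : zmodType) (i N : nat) (F : nat -> V) : (i <= N)%N ->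
  \sum_(i <= j < N) F j = \sum_(0 <= j < N | (i <= j)%N) F j.
Proof.
move=> iN; rewrite [RHS]big_mkcond [RHS](big_cat_nat (n:=i)) //=.
rewrite [X in _ = X + _]big1_seq ?add0r; last first.
  by move=> j /andP[_]; rewrite mem_index_iota => /andP[_ h]; rewrite leqNgt h.
by apply: eq_big_nat => j /andP[h _]; rewrite h.
Qed.

Lemma sum_to (V : zmodType) (i N : nat) (F : nat -> V) : (i < N)%N ->
  \sum_(0 <= j < i.+1) F j = \sum_(0 <= j < N | (j <= i)%N) F j.
Proof.
move=> iN; rewrite (big_nat_widen 0 i.+1 N) //.
Qed.

Lemma tri (V : zmodType) (N : nat) (a : nat -> nat -> V) :
  \sum_(0 <= i < N) \sum_(0 <= j < i.+1) a i j = \sum_(0 <= i < N) \sum_(i <= j < N) a j i.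
Proof.
rewrite (eq_big_nat _ _ (F2 := fun i => \sum_(0 <= j < N) (if (j <= i)%N then a i j else 0))); last first.
  by move=> i /andP[_ iN]; rewrite (sum_to _ iN) big_mkcond.
rewrite [RHS](eq_big_nat _ _ (F2 := fun i => \sum_(0 <= j < N) (if (i <= j)%N then a j i else 0))); last first.
  by move=> i /andP[_ iN]; rewrite (sum_from _ (ltnW iN)) big_mkcond.
by rewrite [RHS]exchange_big_nat.
Qed.

Lemma kappaS (A : PreAdditive) (M : Duplicial A) k : kappa M k.+1 =
  sgn k.+1 (hcomp (del M k.+1 0) (sdeg M k.+1 k.+2) - hcomp (sdeg M k k.+1) (del M k 0)).
Proof. by []. Qed.
Lemma kappa0 (A : PreAdditive) (M : Duplicial A) : kappa M 0 = hcomp (del M 0 0) (sdeg M 0 1).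
Proof. by rewrite /kappa /sgn /= subr0. Qed.

Lemma F1 (A : PreAdditive) (M : Duplicial A) k i : (1 <= i)%N -> (i <= k.+1)%N ->
  hcomp (del M k.+1 i) (kappa M k.+2) = - hcomp (kappa M k.+1) (del M k.+1 i.+1).
Proof.
move=> h1 h2.
have e1 : hcomp (del M k.+1 i) (hcomp (del M k.+2 0) (sdeg M k.+2 k.+3)) =
          hcomp (hcomp (del M k.+1 0) (sdeg M k.+1 k.+2)) (del M k.+1 i.+1).
  rewrite hcompA -(@hE5 A M k.+1 0 i.+1 ltac:(lia) ltac:(lia)) -hcompA.
  by rewrite (@hE2 A M k.+1 k.+3 i.+1 ltac:(lia) ltac:(lia) ltac:(lia)) hcompA.
have e2 : hcomp (del M k.+1 i) (hcomp (sdeg M k.+1 k.+2) (del M k.+1 0)) =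
          hcomp (hcomp (sdeg M k k.+1) (del M k 0)) (del M k.+1 i.+1).
  rewrite hcompA (@hE2 A M k k.+2 i ltac:(lia) ltac:(lia) ltac:(lia)).
  by rewrite -hcompA -(@hE5 A M k 0 i.+1 ltac:(lia) ltac:(lia)) hcompA.
rewrite !kappaS hcomp_sgnr hcompBr e1 e2 hcomp_sgnl hcompBl.
by rewrite sgnS.
Qed.

Lemma F2 (A : PreAdditive) (M : Duplicial A) n :
  hcomp (del M n 0) (kappa M n.+1) = hcomp (kappa M n) (del M n 0 - del M n 1).
Proof.
have e1 : hcomp (del M n 0) (hcomp (del M n.+1 0) (sdeg M n.+1 n.+2)) =
          hcomp (hcomp (del M n 0) (sdeg M n n.+1)) (del M n 1).
  rewrite hcompA -(@hE5 A M n 0 1 ltac:(lia) ltac:(lia)) -hcompA.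
  by rewrite (@hE2 A M n n.+2 1 ltac:(lia) ltac:(lia) ltac:(lia)) hcompA.
have e0 : hcomp (del M n 0) (hcomp (sdeg M n n.+1) (del M n 0)) =
          hcomp (hcomp (del M n 0) (sdeg M n n.+1)) (del M n 0) by rewrite hcompA.
case: n e1 e0 => [|k] e1 e0.
  by rewrite kappaS kappa0 hcomp_sgnr hcompBr e1 e0 hcompBr sgnS sgn0n opprB.
rewrite !kappaS hcomp_sgnr hcompBr e1 e0 hcomp_sgnl !hcompBr !hcompBl.
have e3 : hcomp (hcomp (sdeg M k k.+1) (del M k 0)) (del M k.+1 1) =
          hcomp (hcomp (sdeg M k k.+1) (del M k 0)) (del M k.+1 0).
  by rewrite -!hcompA (@hE5 A M k 0 1).
rewrite e3 sgnS -sgnN; congr (sgn _ _).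
by rewrite opprB [in RHS]opprB addrA subrK.
Qed.

Definition Pk (A : PreAdditive) (M : Duplicial A) n k :=
  \sum_(0 <= i < k.+1) sgn i (del M n i).

Lemma Pk0 (A : PreAdditive) (M : Duplicial A) n : Pk M n 0 = del M n 0.
Proof. by rewrite /Pk big_nat1. Qed.
Lemma PkS (A : PreAdditive) (M : Duplicial A) n k : Pk M n k.+1 = Pk M n k + sgn k.+1 (del M n k.+1).
Proof. by rewrite /Pk big_nat_recr. Qed.

Lemma L2 (A : PreAdditive) (M : Duplicial A) n k : (k <= n)%N ->
  hcomp (Pk M n k) (kappa M n.+1) = hcomp (kappa M n) (Pk M n k.+1).
Proof.
elim: k => [|k IH] kn.
  by rewrite Pk0 F2 PkS Pk0 sgnS sgn0n.
rewrite PkS hcompDl IH ?(ltnW kn) // hcomp_sgnl.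
clear IH; case: n kn => [|n] kn //.
rewrite F1 // sgnN -sgnS -hcomp_sgnr -hcompDr.
by rewrite [Pk M n.+1 k.+2]PkS.
Qed.

Lemma hpow0 (A : PreAdditive) X (f : Hom A X X) : hpow f 0 = idm X.
Proof. by []. Qed.
Lemma hpowS (A : PreAdditive) X (f : Hom A X X) n : hpow f n.+1 = hcomp f (hpow f n).
Proof. by []. Qed.
Lemma hpowSr (A : PreAdditive) X (f : Hom A X X) n : hpow f n.+1 = hcomp (hpow f n) f.
Proof.
elim: n => [|n IH]; first by rewrite hpowS hpow0 hcomp1m hcompm1.
by rewrite [LHS]hpowS [in LHS]IH hcompA -hpowS.
Qed.

Lemma L3 (A : PreAdditive) (M : Duplicial A) n k : (k <= n.+1)%N ->
  hcomp (del M n 0) (hpow (kappa M n.+1) k) = hcomp (hpow (kappa M n) k) (Pk M n k).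
Proof.
elim: k => [|k IH] kn.
  by rewrite !hpow0 hcompm1 hcomp1m Pk0.
rewrite !hpowSr hcompA IH ?(ltnW kn) // -hcompA (@L2 A M n k kn) hcompA.
done.
Qed.

Lemma K0 (A : PreAdditive) (M : Duplicial A) k :
  hcomp (kappa M k.+1) (sdeg M k 0) = 0.
Proof.
rewrite kappaS hcomp_sgnl hcompBl -!hcompA.
rewrite -(@hE6 A M k 0 k.+1 ltac:(lia) ltac:(lia)) hcompA.
rewrite (@hE1 A M k.+1 0 0 ltac:(lia) ltac:(lia) ltac:(lia)) hcomp1m.
rewrite (@hE1 A M k 0 0 ltac:(lia) ltac:(lia) ltac:(lia)) hcompm1.
by rewrite subrr sgn0.
Qed.

Lemma Ks (A : PreAdditive) (M : Duplicial A) k i : (1 <= i)%N -> (i <= k.+1)%N ->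
  hcomp (kappa M k.+2) (sdeg M k.+1 i) = - hcomp (sdeg M k.+1 i.-1) (kappa M k.+1).
Proof.
move=> h1 h2.
have e1 : hcomp (hcomp (del M k.+2 0) (sdeg M k.+2 k.+3)) (sdeg M k.+1 i) =
   hcomp (sdeg M k.+1 i.-1) (hcomp (del M k.+1 0) (sdeg M k.+1 k.+2)).
  rewrite -hcompA -(@hE6 A M k.+1 i k.+2 ltac:(lia) ltac:(lia)) hcompA.
  by rewrite (@hE2 A M k.+1 i 0 ltac:(lia) ltac:(lia) ltac:(lia)) -hcompA.
have e2 : hcomp (hcomp (sdeg M k.+1 k.+2) (del M k.+1 0)) (sdeg M k.+1 i) =
   hcomp (sdeg M k.+1 i.-1) (hcomp (sdeg M k k.+1) (del M k 0)).
  rewrite -hcompA (@hE2 A M k i 0 ltac:(lia) ltac:(lia) ltac:(lia)) hcompA.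
  rewrite -(@hE6 A M k i.-1 k.+1 ltac:(lia) ltac:(lia)) -hcompA.
  by [].
rewrite !kappaS hcomp_sgnl hcompBl e1 e2 hcomp_sgnr hcompBr.
by rewrite sgnS.
Qed.

Lemma L5 (A : PreAdditive) (M : Duplicial A) i k j : (i <= k)%N -> (i < j)%N ->
  hcomp (hpow (kappa M k.+1) j) (sdeg M k i) = 0.
Proof.
elim: i k j => [|i IH] k [|j] // ik ij.
  by rewrite hpowSr -hcompA K0 hcomp0r.
case: k ik => [|k] // ik.
rewrite hpowSr -hcompA Ks // hcompNr /= hcompA (IH k.+1 j (ltnW ik) ij) hcomp0l oppr0.
done.
Qed.

Definition sp (A : PreAdditive) (M : Duplicial A) n :=
  \sum_(0 <= i < n.+1) sgn i (sdeg M n i).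

Lemma bb_nat (A : PreAdditive) (M : Duplicial A) n :
  bb M n = \sum_(0 <= i < n.+2) sgn i (del M n i).
Proof. by rewrite /bb big_mkord. Qed.
Lemma dd_nat (A : PreAdditive) (M : Duplicial A) n :
  dd M n = \sum_(0 <= i < n.+2) sgn i (sdeg M n i).
Proof. by rewrite /dd big_mkord. Qed.
Lemma bbE (A : PreAdditive) (M : Duplicial A) n : bb M n = Pk M n n + sgn n.+1 (del M n n.+1).
Proof. by rewrite bb_nat big_nat_recr. Qed.
Lemma ddE (A : PreAdditive) (M : Duplicial A) n : dd M n = sp M n + sgn n.+1 (sdeg M n n.+1).
Proof. by rewrite dd_nat big_nat_recr. Qed.

Lemma Rrow (A : PreAdditive) (M : Duplicial A) k i : (i <= k.+1)%N ->
  hcomp (bb M k.+1) (sdeg M k.+1 i) =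
  hcomp (sdeg M k i.-1) (\sum_(0 <= j < i) sgn j (del M k j)) -
  hcomp (sdeg M k i) (\sum_(i.+1 <= j < k.+2) sgn j (del M k j)).
Proof.
move=> ik.
rewrite bb_nat hcomp_suml (@big_cat_nat _ _ _ i 0 k.+3) //=; last by lia.
rewrite (@big_cat_nat _ _ _ i.+2 i k.+3) //=; last by lia.
rewrite big_nat_recl // big_nat1 !hcomp_sgnl.
rewrite (@hE1 A M k.+1 i i ltac:(lia) ltac:(lia) ltac:(lia)).
rewrite (@hE1 A M k.+1 i i.+1 ltac:(lia) ltac:(lia) ltac:(lia)).
rewrite sgnS subrr add0r.
congr (_ + _).
  rewrite hcomp_sumr; apply: eq_big_nat => j /andP[_ ji].
  by rewrite hcomp_sgnl hcomp_sgnr (@hE2 A M k i j ji ltac:(lia) ltac:(lia)).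
rewrite hcomp_sumr -sumrN big_add1 /=.
apply: eq_big_nat => j /andP[h1 h2].
rewrite hcomp_sgnl hcomp_sgnr (@hE3 A M k i j.+1 ltac:(lia) ltac:(lia)) /=.
by rewrite sgnS.
Qed.

Lemma N1 (A : PreAdditive) (M : Duplicial A) k :
  hcomp (bb M k.+1) (sp M k.+1) = - hcomp (sp M k) (bb M k).
Proof.
rewrite /sp hcomp_sumr (eq_big_nat _ _ (F2 := fun i =>
   sgn i (hcomp (sdeg M k i.-1) (\sum_(0 <= j < i) sgn j (del M k j))) -
   sgn i (hcomp (sdeg M k i) (\sum_(i.+1 <= j < k.+2) sgn j (del M k j))))); last first.
  by move=> i /andP[_ h]; rewrite hcomp_sgnr Rrow // sgnB.
rewrite sumrB big_nat_recl // (@big_geq _ _ _ 0 0) // hcomp0r sgn0 add0r.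
rewrite [X in _ - X]big_nat_recr //= (@big_geq _ _ _ k.+2 k.+2) // hcomp0r sgn0 addr0.
rewrite -sumrB hcomp_suml -sumrN; apply: eq_big_nat => i /andP[_ ik].
rewrite /= sgnS -opprD -sgnD -hcompDr hcomp_sgnl.
by rewrite bb_nat (@big_cat_nat _ _ _ i.+1 0 k.+2) // ltnW.
Qed.

Lemma N1_0 (A : PreAdditive) (M : Duplicial A) : hcomp (bb M 0) (sp M 0) = 0.
Proof.
rewrite /sp big_nat1 bb_nat big_nat_recr // big_nat1 /= hcomp_sgnr hcompDl hcomp_sgnl.
rewrite hcomp_sgnl (@hE1 A M 0 0 0 erefl erefl erefl) (@hE1 A M 0 0 1 erefl erefl erefl).
by rewrite sgnS subrr.
Qed.

Lemma grp1 (V : zmodType) (I X c d s : V) :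
  c - d = I - (- X + (- c - s + I)) - (X + (d + s)).
Proof.
rewrite !opprD !opprK !addrA.
rewrite (addrAC (I+X+c) s (-I)) (addrAC (I+X) c (-I)) (addrAC I X (-I)) subrr add0r.
rewrite (addrAC (X+c) s (-X)) (addrAC X c (-X)) subrr add0r.
by rewrite (addrAC (c+s) (-d) (-s)) addrK.
Qed.

Definition Ub (A : PreAdditive) (M : Duplicial A) k := \sum_(0 <= j < k.+1) sgn j.+1 (del M k j.+1).

Lemma bbU (A : PreAdditive) (M : Duplicial A) k : bb M k = del M k 0 + Ub M k.
Proof. by rewrite bb_nat big_nat_recl. Qed.

Lemma Rlast (A : PreAdditive) (M : Duplicial A) k :
  hcomp (bb M k.+1) (sdeg M k.+1 k.+2) =
  hcomp (del M k.+1 0) (sdeg M k.+1 k.+2) + hcomp (sdeg M k k.+1) (Ub M k) + sgn k.+2 (idm _).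
Proof.
rewrite bb_nat hcomp_suml big_nat_recl // big_nat_recr // addrA.
congr (_ + _ + _).
- rewrite /Ub hcomp_sumr; apply: eq_big_nat => j /andP[_ jk].
  by rewrite hcomp_sgnl hcomp_sgnr (@hE2 A M k k.+2 j.+1 ltac:(lia) ltac:(lia) ltac:(lia)).
- by rewrite hcomp_sgnl (@hE1 A M k.+1 k.+2 k.+2 ltac:(lia) ltac:(lia) ltac:(lia)).
Qed.

Lemma N3 (A : PreAdditive) (M : Duplicial A) k :
  kappa M k.+1 = idm _ - bd M k.+1 - db M k.+1.
Proof.
rewrite /bd /db /= !ddE hcompDr hcompDl N1 hcomp_sgnr hcomp_sgnl Rlast bbU.
rewrite hcompDr !sgnD sgnK kappaS sgnB [sgn k.+2 _]sgnS [sgn k.+2 _]sgnS.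
by rewrite hcompDr sgnD; apply: grp1.
Qed.

Lemma N3_0 (A : PreAdditive) (M : Duplicial A) :
  kappa M 0 = idm _ - bd M 0 - db M 0.
Proof.
rewrite /bd /db subr0 ddE hcompDr N1_0 add0r hcomp_sgnr bb_nat big_nat_recr // big_nat1.
rewrite hcompDl hcomp_sgnl hcomp_sgnl (@hE1 A M 0 1 1 erefl erefl erefl) kappa0.
by rewrite sgn0n sgnD sgnK sgnS sgn0n opprD opprK addrC subrK.
Qed.

Lemma sgnC (V : zmodType) a b (x : V) : sgn a (sgn b x) = sgn b (sgn a x).
Proof. by rewrite -!sgn_add addnC. Qed.

Lemma sgnNC (V : zmodType) a b (x : V) : sgn a (- sgn b x) = - sgn b (sgn a x).
Proof. by rewrite /sgn; case: (odd a); case: (odd b); rewrite ?opprK. Qed.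

Lemma cancel_sq (V : zmodType) N (a : nat -> nat -> V) :
  (forall i j, (i < N)%N -> (i <= j)%N -> (j < N)%N -> a i j.+1 = - a j i) ->
  \sum_(0 <= i < N) \sum_(0 <= j < N.+1) a i j = 0.
Proof.
move=> h.
rewrite (eq_big_nat _ _ (F2 := fun i => \sum_(0 <= j < i.+1) a i j - \sum_(i <= j < N) a j i)).
  by rewrite sumrB tri subrr.
move=> i /andP[_ iN].
rewrite (@big_cat_nat _ _ _ i.+1 0 N.+1) //; last by lia.
rewrite big_add1 /= -sumrN; congr (_ + _).
by apply: eq_big_nat => j /andP[h1 h2]; apply: h.
Qed.

Lemma N4 (A : PreAdditive) (M : Duplicial A) k : hcomp (bb M k) (bb M k.+1) = 0.
Proof.
rewrite !bb_nat hcomp_suml.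
rewrite (eq_big_nat _ _ (F2 := fun i => \sum_(0 <= j < k.+3)
   sgn i (sgn j (hcomp (del M k i) (del M k.+1 j))))); last first.
  by move=> i _; rewrite hcomp_sgnl hcomp_sumr sgn_sum; apply: eq_bigr => j _; rewrite hcomp_sgnr.
apply: cancel_sq => i j iN ij jN.
rewrite (@hE5 A M k i j.+1 ltac:(lia) ltac:(lia)) /=.
rewrite [sgn j.+1 _]sgnS. exact: sgnNC.
Qed.

Lemma N5 (A : PreAdditive) (M : Duplicial A) k : hcomp (dd M k.+1) (dd M k) = 0.
Proof.
rewrite !dd_nat hcomp_suml.
rewrite (eq_big_nat _ _ (F2 := fun i => \sum_(0 <= j < k.+2)
   sgn i (sgn j (hcomp (sdeg M k.+1 i) (sdeg M k j))))); last first.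
  by move=> i _; rewrite hcomp_sgnl hcomp_sumr sgn_sum; apply: eq_bigr => j _; rewrite hcomp_sgnr.
rewrite exchange_big_nat.
apply: (cancel_sq (a := fun j i => sgn i (sgn j (hcomp (sdeg M k.+1 i) (sdeg M k j))))) => j i jN ji iN.
rewrite -(@hE6 A M k j i ji ltac:(lia)).
rewrite [sgn i.+1 _]sgnS; congr (- _); exact: sgnC.
Qed.

Lemma grp2 (V : zmodType) (I Z W B : V) : B = Z + - W + I -> W = I - B + Z.
Proof.
move=> ->; rewrite !opprD opprK !addrA.
rewrite (addrAC (I - Z) W (-I)) (addrAC I (-Z) (-I)) subrr add0r.
by rewrite (addrAC (-Z) W Z) addNr add0r.
Qed.

Lemma Zkill (A : PreAdditive) (M : Duplicial A) n :
  hcomp (hpow (kappa M n) n) (hcomp (bb M n) (sp M n)) = 0.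
Proof.
case: n => [|k]; first by rewrite N1_0 hcomp0r.
rewrite N1 hcompNr hcompA /sp hcomp_sumr.
rewrite big1_seq ?hcomp0l ?oppr0 // => i /andP[_]; rewrite mem_index_iota => /andP[_ ik].
by rewrite hcomp_sgnr (@L5 A M i k k.+1) ?sgn0.
Qed.

Lemma piK (A : PreAdditive) (M : Duplicial A) n :
  piDK M n = hcomp (hpow (kappa M n) n) (idm _ - bd M n).
Proof.
rewrite /piDK hcompA (@L3 A M n n (leqnSn n)) -hcompA -hcomp_sgnr.
have -> : sgn n (hcomp (Pk M n n) (sdeg M n n.+1)) =
          idm _ - bd M n + hcomp (bb M n) (sp M n).
  apply: grp2; rewrite /bd ddE hcompDr hcomp_sgnr [X in hcomp X (sdeg M n n.+1)]bbE.
  rewrite hcompDl hcomp_sgnl (@hE1 A M n n.+1 n.+1 ltac:(lia) ltac:(lia) ltac:(lia)).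
  rewrite sgnD sgnK addrA; congr (_ + _ + _).
  exact: sgnS.
by rewrite hcompDr Zkill addr0.
Qed.

Lemma comm_pow (A : PreAdditive) X (f g : Hom A X X) n :
  hcomp f g = hcomp g f -> hcomp (hpow f n) g = hcomp g (hpow f n).
Proof.
move=> fg; elim: n => [|n IH]; first by rewrite hpow0 hcomp1m hcompm1.
by rewrite hpowS -hcompA IH hcompA fg -hcompA.
Qed.

Lemma pow_mul (A : PreAdditive) X (f g : Hom A X X) n :
  hcomp f g = hcomp g f -> hpow (hcomp f g) n = hcomp (hpow f n) (hpow g n).
Proof.
move=> fg; elim: n => [|n IH]; first by rewrite !hpow0 hcomp1m.
rewrite !hpowS IH -hcompA [hcomp g (hcomp (hpow f n) _)]hcompA.
by rewrite -(comm_pow n fg) -!hcompA hcompA.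
Qed.

Lemma Galg (A : PreAdditive) X (K B C : Hom A X X) n :
  K = idm X - B - C -> hcomp B C = 0 -> hcomp C B = 0 ->
  hcomp (hpow K n) (idm X - B) = hcomp (hpow (idm X - B) n.+1) (hpow (idm X - C) n).
Proof.
move=> KE BC CB.
have e1 : hcomp (idm X - B) (idm X - C) = K.
  by rewrite KE hcompBl !hcompBr BC !hcomp1m hcompm1 subr0 addrAC.
have e2 : hcomp (idm X - C) (idm X - B) = K.
  by rewrite KE hcompBl !hcompBr CB !hcomp1m hcompm1 subr0.
have cm : hcomp (idm X - B) (idm X - C) = hcomp (idm X - C) (idm X - B) by rewrite e1 e2.
rewrite -e1 pow_mul // -hcompA (comm_pow n (esym cm)) hcompA -hpowSr.
by [].
Qed.

Theorem mainTheorem15 (A : PreAdditive) (M : Duplicial A) (n : nat) :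
  piDK M n =
  hcomp (hpow (idm (Mob M n) - bd M n) n.+1) (hpow (idm (Mob M n) - db M n) n).
Proof.
rewrite piK; apply: Galg.
- by case: n => [|k]; [exact: N3_0 | exact: N3].
- case: n => [|k]; first by rewrite /db hcomp0r.
  by rewrite /bd /db -!hcompA [hcomp (dd M k.+1) _]hcompA N5 hcomp0l hcomp0r.
- case: n => [|k]; first by rewrite /db hcomp0l.
  by rewrite /bd /db -!hcompA [hcomp (bb M k) _]hcompA N4 hcomp0l hcomp0r.
Qed.
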